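(* Let $m \in \mathbb N$ and let $\phi \colon \mathcal H_2^0 \to \mathcal H_m$ be a map. Then the following are equivalent: (i) $\phi$ is linear and $\phi(\mathcal{IH}_2^0) \subset \mathcal H_m \cap \mathcal U_m$; (ii) there exist $p, q \in \mathbb N \cup \{0\}$ and $U \in \mathcal U_m$ such that $m = 2(p+q)$ and $\phi(A) = U\left((A \otimes I_p) \oplus (-A \otimes I_q)\right)U^\ast$ for all $A \in \mathcal H_2^0$.
   Context: $\mathcal H_m$ is the real vector space of $m\times m$ complex hermitian matrices, $\mathcal U_m$ the set of $m \times m$ unitary matrices, $\mathcal H_2^0$ the trace-zero matrices in $\mathcal H_2$, $\mathcal{IH}_2^0 = \mathcal H_2^0 \cap \mathcal U_2$, $\otimes$ the Kronecker product and $\oplus$ the block-diagonal direct sum (with $0\times0$ blocks omitted). *)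

(* Defs.v *)
From HB Require Import structures.
From mathcomp Require Import all_boot all_order all_algebra.
From mathcomp Require Import complex mxtens.
From mathcomp Require Import Rstruct.
From mathcomp Require Import spectral.

Set Implicit Arguments.
Unset Strict Implicit.
Unset Printing Implicit Defensive.

Import Order.TTheory GRing.Theory Num.Theory.
Local Open Scope ring_scope.
Local Open Scope complex_scope.
Local Open Scope sesquilinear_scope.

Definition C : numClosedFieldType := (Rdefinitions.R)[i].

Definition adjmx (m n : nat) (A : 'M[C]_(m, n)) : 'M[C]_(n, m) := A ^t*.

Definition herm_mx (m : nat) (A : 'M[C]_m) : Prop := adjmx A = A.

Definition unitary_mx (m : nat) (U : 'M[C]_m) : Prop := U \is unitarymx.

Definition herm0 (A : 'M[C]_2) : Prop := herm_mx A /\ \tr A = 0.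

Definition iherm0 (A : 'M[C]_2) : Prop := herm0 A /\ unitary_mx A.

Definition rC (a : Rdefinitions.R) : C := (a%:C)%C.

(* Kronecker product (mathcomp-real-closed's tensmx: index (i,k) |-> i*p+k) *)
Definition kron (m n p q : nat) (A : 'M[C]_(m, n)) (B : 'M[C]_(p, q))
  : 'M[C]_(m * p, n * q) := tensmx A B.

Definition pq_block (p q : nat) (A : 'M[C]_2) : 'M[C]_(2 * p + 2 * q) :=
  block_mx (kron A (1%:M : 'M[C]_p)) 0 0 (kron (- A) (1%:M : 'M[C]_q)).

Definition real_linear_on_herm0 (m : nat) (phi : 'M[C]_2 -> 'M[C]_m) : Prop :=
  forall (a b : Rdefinitions.R) (A B : 'M[C]_2), herm0 A -> herm0 B ->
    phi (rC a *: A + rC b *: B) = rC a *: phi A + rC b *: phi B.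

(* Main.v *)
Require Import Defs.
From HB Require Import structures.
From mathcomp Require Import all_boot all_order all_algebra.
From mathcomp Require Import complex mxtens Rstruct.
From mathcomp Require Import spectral.
From mathcomp Require Import ring lra.
Import GRing.Theory Num.Theory.
Local Open Scope ring_scope.

Lemma adjmxE m n (A : 'M[C]_(m,n)) i j : adjmx A i j = (A j i)^*.
Proof. by rewrite !mxE. Qed.
Lemma adjmxK m n (A : 'M[C]_(m,n)) : adjmx (adjmx A) = A.
Proof. exact: trmxCK. Qed.
Lemma adjmxM m n p (A : 'M[C]_(m,n)) (B : 'M[C]_(n,p)) :
  adjmx (A *m B) = adjmx B *m adjmx A.
Proof. by rewrite /adjmx trmx_mul map_mxM. Qed.
Lemma adjmxD m n (A B : 'M[C]_(m,n)) : adjmx (A + B) = adjmx A + adjmx B.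
Proof. by apply/matrixP => i j; rewrite !mxE rmorphD. Qed.
Lemma adjmxN m n (A : 'M[C]_(m,n)) : adjmx (- A) = - adjmx A.
Proof. by apply/matrixP => i j; rewrite !mxE rmorphN. Qed.
Lemma adjmxZ m n a (A : 'M[C]_(m,n)) : adjmx (a *: A) = a^* *: adjmx A.
Proof. by apply/matrixP => i j; rewrite !mxE rmorphM. Qed.
Lemma adjmx0 m n : adjmx (0 : 'M[C]_(m,n)) = 0.
Proof. by apply/matrixP => i j; rewrite !mxE rmorph0. Qed.
Lemma adjmx1 m : adjmx (1%:M : 'M[C]_m) = 1%:M.
Proof. by apply/matrixP => i j; rewrite !mxE rmorphMn rmorph1 eq_sym. Qed.
Lemma adjmx_col m1 m2 n (A : 'M[C]_(m1,n)) (B : 'M[C]_(m2,n)) :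
  adjmx (col_mx A B) = row_mx (adjmx A) (adjmx B).
Proof. by rewrite /adjmx tr_col_mx map_row_mx. Qed.

Lemma rC_real a : rC a \is Num.real.
Proof. by apply/complex_realP; exists a. Qed.
Lemma conj_rC a : (rC a)^* = rC a.
Proof. exact/conj_Creal/rC_real. Qed.
Lemma real_rC (z : C) : z \is Num.real -> exists a, z = rC a.
Proof. by move=> /complex_realP. Qed.
Lemma rC0 : rC 0 = 0. Proof. by []. Qed.
Lemma rC1 : rC 1 = 1. Proof. by []. Qed.
Lemma rCM a b : rC (a * b) = rC a * rC b.
Proof. by rewrite /rC rmorphM. Qed.
Lemma rCD a b : rC (a + b) = rC a + rC b.
Proof. by rewrite /rC rmorphD. Qed.

Lemma eq_opp0 m n (A : 'M[C]_(m,n)) : A = - A -> A = 0.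
Proof.
move=> h; apply/eqP; have : (2%:R : C) *: A == 0.
  by rewrite scaler_nat mulr2n {1}h addNr.
by rewrite scaler_eq0 pnatr_eq0.
Qed.
Lemma unitaryE m n (U : 'M[C]_(m, n)) : U \is unitarymx <-> U *m adjmx U = 1%:M.
Proof. by split => /unitarymxP. Qed.

Definition mx2 (a b c d : C) : 'M[C]_2 :=
  \matrix_(i < 2, j < 2) (if val i == 0%N then (if val j == 0%N then a else b)
                          else (if val j == 0%N then c else d)).

Lemma ord2_cases (i : 'I_2) : i = 0 \/ i = 1.
Proof. by case: i => [[|[|]]] // H; [left|right]; apply: val_inj. Qed.

Lemma sum2 (F : 'I_2 -> C) : \sum_i F i = F 0 + F 1.
Proof.
rewrite !big_ord_recl big_ord0 addr0; congr (_ + F _).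
exact: val_inj.
Qed.

Lemma mx2_eta (A : 'M[C]_2) : A = mx2 (A 0 0) (A 0 1) (A 1 0) (A 1 1).
Proof.
by apply/matrixP => i j; rewrite !mxE; case: (ord2_cases i) => ->;
  case: (ord2_cases j) => ->.
Qed.

Lemma mx2E a b c d : ((mx2 a b c d) 0 0 = a) * ((mx2 a b c d) 0 1 = b)
   * ((mx2 a b c d) 1 0 = c) * ((mx2 a b c d) 1 1 = d).
Proof. by rewrite !mxE. Qed.

Lemma mx2_mul a b c d a' b' c' d' :
  mx2 a b c d *m mx2 a' b' c' d' =
  mx2 (a * a' + b * c') (a * b' + b * d') (c * a' + d * c') (c * b' + d * d').
Proof.
apply/matrixP => i j; rewrite !mxE !sum2 !mxE /=.
by case: (ord2_cases i) => ->; case: (ord2_cases j) => ->.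
Qed.

Lemma mx2_add a b c d a' b' c' d' :
  mx2 a b c d + mx2 a' b' c' d' = mx2 (a + a') (b + b') (c + c') (d + d').
Proof.
apply/matrixP => i j; rewrite !mxE.
by case: (ord2_cases i) => ->; case: (ord2_cases j) => ->.
Qed.

Lemma mx2_scale k a b c d : k *: mx2 a b c d = mx2 (k * a) (k * b) (k * c) (k * d).
Proof.
apply/matrixP => i j; rewrite !mxE.
by case: (ord2_cases i) => ->; case: (ord2_cases j) => ->.
Qed.

Lemma mx2_adj a b c d : adjmx (mx2 a b c d) = mx2 a^* c^* b^* d^*.
Proof.
apply/matrixP => i j; rewrite !mxE.
by case: (ord2_cases i) => ->; case: (ord2_cases j) => ->.
Qed.

Lemma mx2_tr a b c d : \tr (mx2 a b c d) = a + d.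
Proof. by rewrite /mxtrace sum2 !mxE. Qed.

Lemma mx2_1 : 1%:M = mx2 1 0 0 1.
Proof.
apply/matrixP => i j; rewrite !mxE.
by case: (ord2_cases i) => ->; case: (ord2_cases j) => ->.
Qed.

Lemma mx2_0 : 0 = mx2 0 0 0 0.
Proof.
apply/matrixP => i j; rewrite !mxE.
by case: (ord2_cases i) => ->; case: (ord2_cases j) => ->.
Qed.

Lemma mx2_inj a b c d a' b' c' d' : a = a' -> b = b' -> c = c' -> d = d' ->
  mx2 a b c d = mx2 a' b' c' d'.
Proof. by move=> -> -> -> ->. Qed.


Lemma mx2_1' : (1 : 'M[C]_2) = mx2 1 0 0 1.
Proof. exact: mx2_1. Qed.

Definition sx := mx2 0 1 1 0.
Definition sy := mx2 0 (- 'i) 'i 0.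
Definition sz := mx2 1 0 0 (-1).

Lemma iM : 'i * 'i = -1 :> C. Proof. by rewrite -expr2 sqrCi. Qed.
Ltac simp2 := rewrite ?mulr0 ?mul0r ?mulr1 ?mul1r ?addr0 ?add0r ?mulrN1 ?mulN1r ?mulrN ?mulNr ?opprK ?iM ?subrr ?addrN ?opprK.

Lemma sx_iherm : iherm0 sx.
Proof.
rewrite /iherm0 /herm0 /herm_mx /unitary_mx /sx.
split; first by rewrite mx2_adj mx2_tr !rmorph0 rmorph1 addr0.
apply/unitaryE; rewrite mx2_adj !rmorph0 !rmorph1 mx2_mul ?mx2_1 ?mx2_1'.
by apply: mx2_inj; simp2.
Qed.

Lemma sy_iherm : iherm0 sy.
Proof.
rewrite /iherm0 /herm0 /herm_mx /unitary_mx /sy.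
split; first by rewrite mx2_adj mx2_tr !rmorph0 rmorphN /= conjCi opprK addr0.
apply/unitaryE; rewrite mx2_adj !rmorph0 rmorphN /= conjCi opprK mx2_mul ?mx2_1 ?mx2_1'.
by apply: mx2_inj; simp2.
Qed.

Lemma sz_iherm : iherm0 sz.
Proof.
rewrite /iherm0 /herm0 /herm_mx /unitary_mx /sz.
split; first by rewrite mx2_adj mx2_tr !rmorph0 rmorphN /= conjC1 subrr.
apply/unitaryE; rewrite mx2_adj !rmorph0 rmorphN /= conjC1 mx2_mul ?mx2_1 ?mx2_1'.
by apply: mx2_inj; simp2.
Qed.

Lemma sxy : sx *m sy + sy *m sx = 0.
Proof.
rewrite /sx /sy !mx2_mul mx2_add mx2_0; apply: mx2_inj; simp2 => //.
all: by rewrite addrC subrr.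
Qed.

Lemma sxz : sx *m sz + sz *m sx = 0.
Proof.
rewrite /sx /sz !mx2_mul mx2_add mx2_0; apply: mx2_inj; simp2 => //.
all: by rewrite addrC subrr.
Qed.

Lemma syz : sy *m sz + sz *m sy = 0.
Proof.
rewrite /sy /sz !mx2_mul mx2_add mx2_0; apply: mx2_inj; simp2 => //.
all: by rewrite addrC subrr.
Qed.

Lemma herm0_decomp A : herm0 A ->
  exists a b c, A = rC a *: sx + rC b *: sy + rC c *: sz.
Proof.
case=> hA trA.
have e00 : (A 0 0)^* = A 0 0 by rewrite -{2}hA adjmxE.
have e01 : A 0 1 = (A 1 0)^* by rewrite -{1}hA adjmxE.
have e11 : A 1 1 = - A 0 0.
  by move: trA; rewrite {1}(mx2_eta A) mx2_tr => /eqP; rewrite addrC addr_eq0 => /eqP.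
have r0 : A 0 0 \is Num.real by rewrite CrealE e00.
have [c ec] := real_rC _ r0.
have [a ea] := real_rC _ (Creal_Re (A 1 0)).
have [b eb] := real_rC _ (Creal_Im (A 1 0)).
exists a, b, c.
rewrite (mx2_eta A) e01 e11 ec /sx /sy /sz !mx2_scale !mx2_add.
have hx := Crect (A 1 0).
apply: mx2_inj; simp2 => //.
- rewrite hx rmorphD rmorphM /= conjCi !conj_Creal ?Creal_Re ?Creal_Im // -ea -eb.
  by rewrite mulNr [_ * 'i]mulrC.
- by rewrite hx -ea -eb mulrC.
Qed.

Lemma expand_sq n (S T : 'M[C]_n) a b :
  (a *: S + b *: T) *m (a *: S + b *: T) =
  (a * a) *: (S *m S) + (b * b) *: (T *m T) + (a * b) *: (S *m T + T *m S).
Proof.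
rewrite !mulmxDl !mulmxDr -!scalemxAl -!scalemxAr !scalerA scalerDr.
rewrite [b * a]mulrC.
rewrite -!addrA; congr (_ + _).
by rewrite addrA addrC.
Qed.

Definition c3 : C := rC (3 / 5).
Definition c4 : C := rC (4 / 5).

Lemma c34 : c3 * c3 + c4 * c4 = 1.
Proof. by rewrite /c3 /c4 -!rCM -rCD -rC1; congr rC; field. Qed.

Lemma rC_neq0 x : x != 0 -> rC x != 0.
Proof. by apply: contra => /eqP; rewrite -rC0 => /complexI ->. Qed.

Lemma c34_neq0 : c3 * c4 != 0.
Proof. by rewrite /c3 /c4 -rCM rC_neq0 // !mulf_neq0 // ?invr_eq0 ?pnatr_eq0. Qed.

Lemma herm0D A B : herm0 A -> herm0 B -> herm0 (A + B).
Proof.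
by case=> hA tA [hB tB]; split; rewrite /herm_mx ?adjmxD ?hA ?hB // mxtraceD tA tB addr0.
Qed.

Lemma herm0Z a A : herm0 A -> herm0 (rC a *: A).
Proof.
by case=> hA tA; split; rewrite /herm_mx ?adjmxZ ?conj_rC ?hA // mxtraceZ tA mulr0.
Qed.

Lemma herm_sq n (S : 'M[C]_n) : herm_mx S -> S \is unitarymx -> S *m S = 1%:M.
Proof. by move=> hS /unitaryE; rewrite hS. Qed.

Lemma iherm_comb S T : iherm0 S -> iherm0 T -> S *m T + T *m S = 0 ->
  iherm0 (c3 *: S + c4 *: T).
Proof.
case=> hS uS [hT uT] hST; split; first exact: herm0D _ _ (herm0Z _ _ hS) (herm0Z _ _ hT).
apply/unitaryE; have [-> _] := herm0D _ _ (herm0Z (3/5) _ hS) (herm0Z (4/5) _ hT).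
rewrite expand_sq hST scaler0 addr0 !herm_sq //; first by rewrite -scalerDl c34 scale1r.
  by case: hT. by case: hS.
Qed.

Section Lin.
Variable m : nat.
Variable phi : 'M[C]_2 -> 'M[C]_m.
Hypothesis lin : real_linear_on_herm0 phi.

Lemma phiZ a A : herm0 A -> phi (rC a *: A) = rC a *: phi A.
Proof. by move=> hA; have := lin a 0 A A hA hA; rewrite rC0 !scale0r !addr0. Qed.

Lemma phiD A B : herm0 A -> herm0 B -> phi (A + B) = phi A + phi B.
Proof. by move=> hA hB; have := lin 1 1 A B hA hB; rewrite rC1 !scale1r. Qed.

Hypothesis hu : forall A, iherm0 A -> herm_mx (phi A) /\ unitary_mx (phi A).

Lemma phi_sq A : iherm0 A -> phi A *m phi A = 1%:M.
Proof. by move=> /hu [h u]; apply: herm_sq. Qed.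

Lemma phi_anti S T : iherm0 S -> iherm0 T -> S *m T + T *m S = 0 ->
  phi S *m phi T + phi T *m phi S = 0.
Proof.
move=> iS iT hST; have := phi_sq _ (iherm_comb S T iS iT hST).
have [hS _] := iS; have [hT _] := iT.
rewrite phiD ?phiZ //; try by apply: herm0Z.
rewrite expand_sq !phi_sq // -scalerDl c34 scale1r => /eqP.
rewrite -subr_eq0 addrAC subrr add0r scaler_eq0 (negbTE c34_neq0) /=.
by move/eqP.
Qed.
End Lin.

Lemma proj_onb m (P : 'M[C]_m) : adjmx P = P -> P *m P = P ->
  exists E : 'M[C]_(\rank P, m),
    [/\ E *m adjmx E = 1%:M, adjmx E *m E = P & E *m P = E].
Proof.
move=> hP PP.
pose E := schmidt (row_base P).
have uE : E \is unitarymx := schmidt_unitarymx _ (rank_leq_col P).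
have eqE : (E :=: P)%MS := eqmx_trans (eqmx_schmidt_free (row_base_free P)) (eq_row_base P).
have sEP : (E <= P)%MS by rewrite eqE.
have sPE : (P <= E)%MS by rewrite eqE.
case/submxP: sEP => K hK; case/submxP: sPE => L hL.
have EP : E *m P = E by rewrite hK -mulmxA PP.
have uE' := uE; move/unitaryE: uE' => uE'.
exists E; split => //.
have PE : P *m adjmx E = adjmx E by have := congr1 (@adjmx _ _) EP; rewrite adjmxM hP.
have := congr1 (mulmx^~ (adjmx E)) hL; rewrite /= -mulmxA uE' mulmx1 PE => ->.
by rewrite [RHS]hL.
Qed.

Section Proj.
Variable m : nat.
Variables A B : 'M[C]_m.
Hypotheses (hA : adjmx A = A) (hB : adjmx B = B) (AA : A *m A = 1%:M) (BB : B *m B = 1%:M)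
  (AB : A *m B = B *m A).

Lemma oneA_A : (1%:M + A) *m A = 1%:M + A.
Proof. by rewrite mulmxDl mul1mx AA addrC. Qed.
Lemma oneB_B : (1%:M + B) *m B = 1%:M + B.
Proof. by rewrite mulmxDl mul1mx BB addrC. Qed.
Lemma oneA_sq : (1%:M + A) *m (1%:M + A) = (1%:M + A) + (1%:M + A).
Proof. by rewrite mulmxDr mulmx1 oneA_A. Qed.
Lemma oneB_sq : (1%:M + B) *m (1%:M + B) = (1%:M + B) + (1%:M + B).
Proof. by rewrite mulmxDr mulmx1 oneB_B. Qed.
Lemma oneAB_comm : (1%:M + B) *m (1%:M + A) = (1%:M + A) *m (1%:M + B).
Proof.
rewrite !mulmxDl !mulmxDr !mul1mx !mulmx1 AB.
by rewrite -!addrA; congr (_ + _); rewrite !addrA; congr (_ + _); rewrite addrC.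
Qed.

Definition Qp := 4%:R^-1 *: ((1%:M + A) *m (1%:M + B)).

Lemma Qp_herm : adjmx Qp = Qp.
Proof.
rewrite /Qp adjmxZ adjmxM !adjmxD adjmx1 hA hB oneAB_comm.
by rewrite rmorphV ?unitfE ?pnatr_eq0 // rmorph_nat.
Qed.

Lemma QpA : Qp *m A = Qp.
Proof.
have h : (1%:M + B) *m A = A *m (1%:M + B) by rewrite mulmxDl mul1mx mulmxDr mulmx1 AB.
by rewrite /Qp -scalemxAl -mulmxA h mulmxA oneA_A.
Qed.
Lemma QpB : Qp *m B = Qp.
Proof. by rewrite /Qp -scalemxAl -mulmxA oneB_B. Qed.

Lemma four_sq : (1%:M + A) *m (1%:M + B) *m (1%:M + A) *m (1%:M + B)
   = 4%:R *: ((1%:M + A) *m (1%:M + B)).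
Proof.
rewrite -[(1%:M + A) *m (1%:M + B) *m (1%:M + A)]mulmxA oneAB_comm mulmxA oneA_sq.
rewrite -mulmxA oneB_sq.
set a := 1%:M + A; set b := 1%:M + B.
by rewrite mulmxDl !mulmxDr scaler_nat !mulrS mulr0n addr0 !addrA.
Qed.

Lemma Qp_idem : Qp *m Qp = Qp.
Proof.
rewrite /Qp -scalemxAl -scalemxAr scalerA mulmxA four_sq scalerA.
by rewrite -mulrA mulVf ?pnatr_eq0 // mulr1.
Qed.
End Proj.

Section Pauli.
Variable m : nat.
Variables X Y Z : 'M[C]_m.
Hypotheses (hX : adjmx X = X) (hY : adjmx Y = Y) (hZ : adjmx Z = Z).
Hypotheses (XX : X *m X = 1%:M) (YY : Y *m Y = 1%:M) (ZZ : Z *m Z = 1%:M).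
Hypotheses (aXY : X *m Y + Y *m X = 0) (aXZ : X *m Z + Z *m X = 0)
  (aYZ : Y *m Z + Z *m Y = 0).

Lemma anti_swap (A B : 'M[C]_m) : A *m B + B *m A = 0 -> forall k (P : 'M[C]_(k, m)),
  P *m B *m A = - (P *m A *m B).
Proof.
move=> h k P; rewrite -!mulmxA -mulmxN; congr (_ *m _).
by apply/eqP; rewrite -addr_eq0 addrC h.
Qed.

Lemma sq_rm (A : 'M[C]_m) : A *m A = 1%:M -> forall k (P : 'M[C]_(k, m)), P *m A *m A = P.
Proof. by move=> h k P; rewrite -mulmxA h mulmx1. Qed.

Let swYX := anti_swap _ _ aXY.
Let swZX := anti_swap _ _ aXZ.
Let swZY := anti_swap _ _ aYZ.
Let rmX := sq_rm _ XX.
Let rmY := sq_rm _ YY.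
Let rmZ := sq_rm _ ZZ.

Definition Wm := (- 'i) *: (X *m Y *m Z).

Lemma PK1 : X *m Y *m Z *m X = Y *m Z.
Proof. by rewrite swZX swYX mulNmx opprK XX mul1mx. Qed.

Lemma anti_swap0 (A B : 'M[C]_m) : A *m B + B *m A = 0 -> B *m A = - (A *m B).
Proof. by move=> h; apply/eqP; rewrite -addr_eq0 addrC h. Qed.

Let hYX := anti_swap0 _ _ aXY.
Let hZX := anti_swap0 _ _ aXZ.
Let hZY := anti_swap0 _ _ aYZ.

Lemma PK2 : Z *m Y *m X = - (X *m Y *m Z).
Proof. by rewrite swYX hZX mulNmx opprK swZY. Qed.

Lemma PK3 : Z *m X *m Y *m Z = X *m Y.
Proof. by rewrite hZX !mulNmx swZY !mulNmx opprK rmZ. Qed.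

Lemma PK4 : X *m Y *m Z *m (X *m Y *m Z) = - 1%:M.
Proof. by rewrite !mulmxA PK1 swZY YY mul1mx mulNmx ZZ. Qed.

Lemma Wm_herm : adjmx Wm = Wm.
Proof.
rewrite /Wm adjmxZ !adjmxM hX hY hZ mulmxA PK2 rmorphN /= conjCi.
by rewrite scalerN scaleNr opprK.
Qed.

Lemma Wm_sq : Wm *m Wm = 1%:M.
Proof.
rewrite /Wm -scalemxAl -scalemxAr scalerA PK4 mulrNN -expr2 sqrCi.
by rewrite scaleN1r opprK.
Qed.

Lemma Wm_X : Wm *m X = X *m Wm.
Proof. by rewrite /Wm -scalemxAl -scalemxAr PK1 !mulmxA XX mul1mx. Qed.

Lemma Wm_Z : Wm *m Z = Z *m Wm.
Proof. by rewrite /Wm -scalemxAl -scalemxAr !mulmxA PK3 rmZ. Qed.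

Lemma Y_Wm : Y = 'i *: (Wm *m X *m Z).
Proof.
rewrite /Wm -!scalemxAl PK1 rmZ scalerA mulrN -expr2 sqrCi opprK scale1r //.
Qed.
End Pauli.

Lemma orth m n1 n2 (E : 'M[C]_(n1,m)) (F : 'M[C]_(n2,m)) (S : 'M[C]_m) :
  adjmx S = S -> E *m S = E -> F *m S = - F -> E *m adjmx F = 0 /\ F *m adjmx E = 0.
Proof.
move=> hS eS fS.
have h : E *m adjmx F = 0.
  have h1 : S *m adjmx F = - adjmx F by rewrite -adjmxN -fS adjmxM hS.
  by apply: eq_opp0; rewrite -{1}eS -mulmxA h1 mulmxN.
split => //; by rewrite -[F]adjmxK -adjmxM h adjmx0.
Qed.

Lemma col_unitary m n1 n2 (A : 'M[C]_(n1,m)) (B : 'M[C]_(n2,m)) :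
  A *m adjmx A = 1%:M -> B *m adjmx B = 1%:M -> A *m adjmx B = 0 -> B *m adjmx A = 0 ->
  col_mx A B *m adjmx (col_mx A B) = 1%:M.
Proof.
move=> hA hB hAB hBA; rewrite adjmx_col mul_col_row hA hB hAB hBA.
by rewrite -scalar_mx_block.
Qed.

Lemma adj_col_mul m n1 n2 (A : 'M[C]_(n1,m)) (B : 'M[C]_(n2,m)) :
  adjmx (col_mx A B) *m col_mx A B = adjmx A *m A + adjmx B *m B.
Proof. by rewrite adjmx_col mul_row_col. Qed.

Arguments Qp {m}.

Section Core.
Variable m : nat.
Variables W X Z : 'M[C]_m.
Hypotheses (hW : adjmx W = W) (hX : adjmx X = X) (hZ : adjmx Z = Z).
Hypotheses (WW : W *m W = 1%:M) (XX : X *m X = 1%:M) (ZZ : Z *m Z = 1%:M).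
Hypotheses (WX : W *m X = X *m W) (WZ : W *m Z = Z *m W) (ZX : Z *m X = - (X *m Z)).

Lemma XQX S T : S *m X = X *m S -> T *m X = - (X *m T) ->
  X *m Qp S T *m X = 4%:R^-1 *: ((1%:M + S) *m (1%:M - T)).
Proof.
move=> SX TX; rewrite /Qp -scalemxAr -scalemxAl; congr (_ *: _).
have h1 : X *m (1%:M + S) = (1%:M + S) *m X by rewrite mulmxDr mulmx1 mulmxDl mul1mx SX.
rewrite mulmxA h1 -!mulmxA; congr (_ *m _).
by rewrite mulmxDl mul1mx TX mulmxDr XX mulmxN mulmxA XX mul1mx.
Qed.

Lemma two_one : (1%:M + Z) + (1%:M - Z) = 1%:M + 1%:M :> 'M[C]_m.
Proof. by rewrite addrACA subrr addr0. Qed.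

Lemma completeness :
  Qp W Z + X *m Qp W Z *m X + (Qp (- W) (- Z) + X *m Qp (- W) (- Z) *m X) = 1%:M.
Proof.
rewrite !XQX //; last 2 first.
- by rewrite mulNmx mulmxN WX.
- by rewrite mulNmx mulmxN ZX.
rewrite /Qp -!scalerDr opprK -!mulmxDr two_one [(1%:M - Z) + _]addrC two_one.
rewrite -mulmxDl addrACA subrr addr0 mulmxDr mulmx1.
have -> : (1%:M + 1%:M : 'M[C]_m) + (1%:M + 1%:M) = 4%:R *: 1%:M.
  by rewrite scaler_nat !mulrS mulr0n addr0 !addrA.
by rewrite scalerA mulVf ?pnatr_eq0 // scale1r.
Qed.
End Core.

Section LinId.
Variables (n k : nat) (E F : 'M[C]_(n, k)) (a b c : C).

Lemma L1 : a *: F + b *: ('i *: (- F)) + c *: E = c *: E + (a - 'i * b) *: F.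
Proof. by rewrite !scalerN scalerA [b * 'i]mulrC scalerBl addrC. Qed.

Lemma L2 : a *: E + b *: ('i *: E) + c *: (- F) = (a + 'i * b) *: E + (- c) *: F.
Proof. by rewrite scalerDl scalerA [b * 'i]mulrC scalerN scaleNr. Qed.

Lemma L3 : a *: (- F) + b *: ('i *: F) + c *: (- E) = (- c) *: E + (- (a - 'i * b)) *: F.
Proof.
rewrite !scalerN scalerA !scaleNr scalerBl opprB [b * 'i]mulrC addrC; congr (_ + _).
by rewrite addrC.
Qed.

Lemma L4 : a *: (- E) + b *: ('i *: (- E)) + c *: F = (- (a + 'i * b)) *: E + (- - c) *: F.
Proof. by rewrite opprK !scalerN scalerA scaleNr scalerDl opprD [b * 'i]mulrC. Qed.
End LinId.

Arguments orth {m n1 n2 E F S}.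
Arguments col_unitary {m n1 n2 A B}.

Definition K2 n (A : 'M[C]_2) : 'M[C]_(n + n) :=
  block_mx (A 0 0)%:M (A 0 1)%:M (A 1 0)%:M (A 1 1)%:M.
Definition Bblk p q (A : 'M[C]_2) : 'M[C]_(p + p + (q + q)) :=
  block_mx (K2 p A) 0 0 (K2 q (- A)).

Lemma K2_mul n k (A : 'M[C]_2) (E F : 'M[C]_(n, k)) :
  K2 n A *m col_mx E F = col_mx (A 0 0 *: E + A 0 1 *: F) (A 1 0 *: E + A 1 1 *: F).
Proof. by rewrite mul_block_col !mul_scalar_mx. Qed.

Lemma Bblk_mul p q k (A : 'M[C]_2) (U1 : 'M[C]_(p + p, k)) (U2 : 'M[C]_(q + q, k)) :
  Bblk p q A *m col_mx U1 U2 = col_mx (K2 p A *m U1) (K2 q (- A) *m U2).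
Proof. by rewrite mul_block_col !mul0mx addr0 add0r. Qed.

Lemma row_act k m (E : 'M[C]_(k, m)) a b c (X Y Z : 'M[C]_m) :
  E *m (a *: X + b *: Y + c *: Z) = a *: (E *m X) + b *: (E *m Y) + c *: (E *m Z).
Proof. by rewrite !mulmxDr -!scalemxAr. Qed.

Lemma mx2N a b c d : - mx2 a b c d = mx2 (- a) (- b) (- c) (- d).
Proof. by rewrite -scaleN1r mx2_scale !mulN1r. Qed.

Section Rows.
Variable m : nat.
Variables W X Z : 'M[C]_m.
Hypotheses (hW : adjmx W = W) (hX : adjmx X = X) (hZ : adjmx Z = Z).
Hypotheses (WW : W *m W = 1%:M) (XX : X *m X = 1%:M) (ZZ : Z *m Z = 1%:M).
Hypotheses (WX : W *m X = X *m W) (WZ : W *m Z = Z *m W) (ZX : Z *m X = - (X *m Z)).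
Variables (p q : nat) (E1 : 'M[C]_(p, m)) (E2 : 'M[C]_(q, m)).
Hypotheses (u1 : E1 *m adjmx E1 = 1%:M) (u2 : E2 *m adjmx E2 = 1%:M).
Hypotheses (c1 : adjmx E1 *m E1 = Qp W Z) (c2 : adjmx E2 *m E2 = Qp (- W) (- Z)).
Hypotheses (e1W : E1 *m W = E1) (e1Z : E1 *m Z = E1) (e2W : E2 *m W = - E2)
  (e2Z : E2 *m Z = - E2).

Let F1 := E1 *m X.
Let G2 := - (E2 *m X).
Definition Vm := col_mx (col_mx E1 (E1 *m X)) (col_mx E2 (- (E2 *m X))).

Lemma XZ : X *m Z = - (Z *m X).
Proof. by rewrite ZX opprK. Qed.

Lemma f1W : F1 *m W = F1.
Proof. by rewrite /F1 -mulmxA -WX mulmxA e1W. Qed.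
Lemma f1Z : F1 *m Z = - F1.
Proof. by rewrite /F1 -mulmxA XZ mulmxN mulmxA e1Z. Qed.
Lemma g2W : G2 *m W = - G2.
Proof. by rewrite /G2 mulNmx -mulmxA -WX mulmxA e2W mulNmx. Qed.
Lemma g2Z : G2 *m Z = G2.
Proof. by rewrite /G2 mulNmx -mulmxA XZ mulmxN mulmxA e2Z mulNmx opprK. Qed.

Lemma uF1 : F1 *m adjmx F1 = 1%:M.
Proof. by rewrite /F1 adjmxM hX mulmxA -(mulmxA E1) XX mulmx1 u1. Qed.
Lemma uG2 : G2 *m adjmx G2 = 1%:M.
Proof.
by rewrite /G2 adjmxN mulNmx mulmxN opprK adjmxM hX mulmxA -(mulmxA E2) XX mulmx1 u2.
Qed.

Lemma Vm_unitary : Vm *m adjmx Vm = 1%:M.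
Proof.
have [o1 o1'] := orth hZ e1Z f1Z.
have [o2 o2'] := orth hZ g2Z e2Z.
have [o3 o3'] := orth hW e1W e2W.
have [o4 o4'] := orth hW e1W g2W.
have [o5 o5'] := orth hW f1W e2W.
have [o6 o6'] := orth hW f1W g2W.
rewrite /Vm; apply: col_unitary.
- exact: col_unitary u1 uF1 o1 o1'.
- exact: col_unitary u2 uG2 o2' o2.
- by rewrite adjmx_col mul_col_row o3 o4 o5 o6 block_mx0.
- by rewrite adjmx_col mul_col_row o3' o4' o5' o6' block_mx0.
Qed.

Lemma Vm_unitary' : adjmx Vm *m Vm = 1%:M.
Proof.
rewrite /Vm !adj_col_mul c1 c2 -(@completeness _ W X Z) //.
congr (_ + _ + (_ + _)).
- by rewrite adjmxM hX !mulmxA -(mulmxA X) c1.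
- by rewrite adjmxN mulNmx mulmxN opprK adjmxM hX -c2 !mulmxA.
Qed.

Let Y := 'i *: (W *m X *m Z).

Lemma E1Y : E1 *m Y = 'i *: (- F1).
Proof. by rewrite /Y -scalemxAr !mulmxA e1W -f1Z. Qed.
Lemma F1X : F1 *m X = E1.
Proof. by rewrite /F1 -mulmxA XX mulmx1. Qed.
Lemma F1Y : F1 *m Y = 'i *: E1.
Proof. by rewrite /Y -scalemxAr !mulmxA f1W F1X e1Z. Qed.
Lemma E2X : E2 *m X = - G2.
Proof. by rewrite /G2 opprK. Qed.
Lemma E2Y : E2 *m Y = 'i *: G2.
Proof. by rewrite /Y -scalemxAr !mulmxA e2W mulNmx E2X opprK g2Z. Qed.
Lemma G2X : G2 *m X = - E2.
Proof. by rewrite /G2 mulNmx -mulmxA XX mulmx1. Qed.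
Lemma G2Y : G2 *m Y = 'i *: (- E2).
Proof. by rewrite /Y -scalemxAr !mulmxA g2W mulNmx G2X opprK e2Z. Qed.

Lemma Vm_act a b c :
  Vm *m (rC a *: X + rC b *: Y + rC c *: Z) =
  Bblk p q (mx2 (rC c) (rC a - 'i * rC b) (rC a + 'i * rC b) (- rC c)) *m Vm.
Proof.
rewrite /Vm Bblk_mul !K2_mul !mul_col_mx !row_act.
rewrite mx2N !mx2E.
rewrite E1Y e1Z F1Y f1Z E2Y e2Z G2Y g2Z F1X G2X.
rewrite -/F1 -/G2 E2X.
rewrite (L1 _ _ E1 F1 (rC a) (rC b) (rC c)) (L2 _ _ E1 F1 (rC a) (rC b) (rC c)).
by rewrite (L3 _ _ E2 G2 (rC a) (rC b) (rC c)) (L4 _ _ E2 G2 (rC a) (rC b) (rC c)).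
Qed.
End Rows.

Lemma kron_K2 n (A : 'M[C]_2) (e : (n + n = 2 * n)%N) :
  kron A (1%:M : 'M[C]_n) = castmx (e, e) (K2 n A).
Proof.
apply/matrixP => r s.
case: (mxtens_indexP r) => i k; case: (mxtens_indexP s) => j l.
rewrite /kron tensmxE castmxE /K2.
have h0 : forall k : 'I_n, cast_ord (esym e) (mxtens_index ((0 : 'I_2), k)) = lshift n k.
  by move=> k0; apply: val_inj => /=; rewrite mul0n add0n.
have h1 : forall k : 'I_n, cast_ord (esym e) (mxtens_index ((1 : 'I_2), k)) = rshift n k.
  by move=> k0; apply: val_inj => /=; rewrite mul1n.
case: (ord2_cases i) => ->; case: (ord2_cases j) => ->;
  rewrite ?h0 ?h1 ?block_mxEul ?block_mxEur ?block_mxEdl ?block_mxEdr !mxE mulr_natr //.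
Qed.

Lemma castmx0 m1 n1 m2 n2 (e : (m1 = m2) * (n1 = n2)) :
  castmx e (0 : 'M[C]_(m1, n1)) = 0.
Proof. by apply/matrixP => i j; rewrite castmxE !mxE. Qed.

Lemma pq_Bblk p q (A : 'M[C]_2) (g : (p + p + (q + q) = 2 * p + 2 * q)%N) :
  pq_block p q A = castmx (g, g) (Bblk p q A).
Proof.
have ep : (p + p = 2 * p)%N by rewrite mul2n addnn.
have eq : (q + q = 2 * q)%N by rewrite mul2n addnn.
rewrite /Bblk (castmx_block ep ep eq eq g g) !castmx0 /pq_block.
by rewrite (kron_K2 _ _ ep) (kron_K2 _ _ eq).
Qed.

Lemma cast_conj n m (h : n = m) (V : 'M[C]_(n, m)) (B : 'M[C]_n) :
  V *m adjmx V = 1%:M -> adjmx V *m V = 1%:M ->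
  unitary_mx (adjmx (castmx (h, erefl m) V)) /\
  adjmx (castmx (h, erefl m) V) *m castmx (h, h) B *m adjmx (adjmx (castmx (h, erefl m) V))
   = adjmx V *m B *m V.
Proof.
case: m / h in V *; rewrite !castmx_id => u1 u2.
split; last by rewrite adjmxK.
by apply/unitaryE; rewrite adjmxK.
Qed.

Lemma kron_lin n (x y : C) (A B : 'M[C]_2) :
  kron (x *: A + y *: B) (1%:M : 'M[C]_n) = x *: kron A 1%:M + y *: kron B 1%:M.
Proof. by apply/matrixP => i j; rewrite !mxE mulrDl !mulrA. Qed.

Lemma pq_lin p q (x y : C) (A B : 'M[C]_2) :
  pq_block p q (x *: A + y *: B) = x *: pq_block p q A + y *: pq_block p q B.
Proof.
rewrite /pq_block !scale_block_mx add_block_mx !scaler0 addr0 kron_lin.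
by rewrite addr0 opprD -!scalerN kron_lin.
Qed.

Lemma castmx1 n m (e : n = m) : castmx (e, e) (1%:M : 'M[C]_n) = 1%:M.
Proof. by case: m / e; rewrite castmx_id. Qed.

Lemma kron11 n : kron (1%:M : 'M[C]_2) (1%:M : 'M[C]_n) = 1%:M.
Proof.
have e : (n + n = 2 * n)%N by rewrite mul2n addnn.
rewrite (kron_K2 _ _ e) /K2 !mxE /=.
have -> : (0%:M : 'M[C]_n) = 0 by apply/matrixP => i j; rewrite !mxE mul0rn.
by rewrite -scalar_mx_block castmx1.
Qed.

Lemma kron_mul n (A B : 'M[C]_2) :
  kron A (1%:M : 'M[C]_n) *m kron B 1%:M = kron (A *m B) 1%:M.
Proof. by rewrite /kron tensmx_mul mulmx1. Qed.

Lemma pq_sq p q (A : 'M[C]_2) : A *m A = 1%:M ->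
  pq_block p q A *m pq_block p q A = 1%:M.
Proof.
move=> AA; rewrite /pq_block mulmx_block !mul0mx !mulmx0 !addr0 !add0r.
rewrite !kron_mul mulNmx mulmxN opprK AA !kron11.
by rewrite -scalar_mx_block.
Qed.

Theorem corollary3p5 (m : nat) (phi : 'M[C]_2 -> 'M[C]_m)
  (phi_maps : forall A : 'M[C]_2, herm0 A -> herm_mx (phi A)) :
  (real_linear_on_herm0 phi /\
     (forall A : 'M[C]_2, iherm0 A -> herm_mx (phi A) /\ unitary_mx (phi A)))
  <->
  (exists (p q : nat) (e : (2 * p + 2 * q = m)%N) (U : 'M[C]_m),
     unitary_mx U /\
     forall A : 'M[C]_2, herm0 A ->
       phi A = U *m castmx (e, e) (pq_block p q A) *m adjmx U).
Proof.
split.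
- case=> lin hu.
  pose X := phi sx; pose Y := phi sy; pose Z := phi sz.
  have [hsx _] := sx_iherm; have [hsy _] := sy_iherm; have [hsz _] := sz_iherm.
  have hX : adjmx X = X by case: (hu _ sx_iherm).
  have hY : adjmx Y = Y by case: (hu _ sy_iherm).
  have hZ : adjmx Z = Z by case: (hu _ sz_iherm).
  have XX : X *m X = 1%:M by apply: (@phi_sq _ _ hu); exact: sx_iherm.
  have YY : Y *m Y = 1%:M by apply: (@phi_sq _ _ hu); exact: sy_iherm.
  have ZZ : Z *m Z = 1%:M by apply: (@phi_sq _ _ hu); exact: sz_iherm.
  have aXY : X *m Y + Y *m X = 0 by apply: (@phi_anti _ _ lin hu _ _ sx_iherm sy_iherm sxy).
  have aXZ : X *m Z + Z *m X = 0 by apply: (@phi_anti _ _ lin hu _ _ sx_iherm sz_iherm sxz).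
  have aYZ : Y *m Z + Z *m Y = 0 by apply: (@phi_anti _ _ lin hu _ _ sy_iherm sz_iherm syz).
  have hW : adjmx (Wm m X Y Z) = Wm m X Y Z by apply: Wm_herm.
  have WW : Wm m X Y Z *m Wm m X Y Z = 1%:M by apply: Wm_sq.
  have WX : Wm m X Y Z *m X = X *m Wm m X Y Z by apply: Wm_X.
  have WZ : Wm m X Y Z *m Z = Z *m Wm m X Y Z by apply: Wm_Z.
  have eY : Y = 'i *: (Wm m X Y Z *m X *m Z) by apply: Y_Wm.
  have ZX : Z *m X = - (X *m Z) by apply: anti_swap0.
  move: hW WW WX WZ eY; set W := Wm m X Y Z => hW WW WX WZ eY.
  have hmW : adjmx (- W) = - W by rewrite adjmxN hW.
  have hmZ : adjmx (- Z) = - Z by rewrite adjmxN hZ.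
  have mWW : (- W) *m (- W) = 1%:M by rewrite mulNmx mulmxN opprK.
  have mZZ : (- Z) *m (- Z) = 1%:M by rewrite mulNmx mulmxN opprK.
  have mWZ : (- W) *m (- Z) = (- Z) *m (- W) by rewrite !mulNmx !mulmxN WZ.
  have hQ1 : adjmx (Qp W Z) = Qp W Z by apply: Qp_herm.
  have iQ1 : Qp W Z *m Qp W Z = Qp W Z by apply: Qp_idem.
  have hQ2 : adjmx (Qp (- W) (- Z)) = Qp (- W) (- Z) by apply: Qp_herm.
  have iQ2 : Qp (- W) (- Z) *m Qp (- W) (- Z) = Qp (- W) (- Z) by apply: Qp_idem.
  have [E1 [u1 c1 p1]] := proj_onb _ _ hQ1 iQ1.
  have [E2 [u2 c2 p2]] := proj_onb _ _ hQ2 iQ2.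
  have e1W : E1 *m W = E1 by rewrite -{1}p1 -mulmxA QpA.
  have e1Z : E1 *m Z = E1 by rewrite -{1}p1 -mulmxA QpB.
  have e2W : E2 *m W = - E2.
    have h : E2 *m (- W) = E2 by rewrite -{1}p2 -mulmxA QpA.
    by rewrite -{2}h mulmxN opprK.
  have e2Z : E2 *m Z = - E2.
    have h : E2 *m (- Z) = E2 by rewrite -{1}p2 -mulmxA QpB.
    by rewrite -{2}h mulmxN opprK.
  move: E1 E2 u1 u2 c1 c2 p1 p2 e1W e1Z e2W e2Z.
  set p := \rank (Qp W Z); set q := \rank (Qp (- W) (- Z)).
  move=> E1 E2 u1 u2 c1 c2 p1 p2 e1W e1Z e2W e2Z.
  pose V := Vm m X p q E1 E2.
  have VV : V *m adjmx V = 1%:M by apply: (@Vm_unitary m W X Z).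
  have VtV : adjmx V *m V = 1%:M by apply: (@Vm_unitary' m W X Z).
  have h0 : (p + p + (q + q) = m)%N.
    have r1 : \rank V = (p + p + (q + q))%N by apply: mxrank_unitary; apply/unitaryE.
    have r2 : \rank (adjmx V) = m by apply: mxrank_unitary; apply/unitaryE; rewrite adjmxK.
    apply/eqP; rewrite eqn_leq; apply/andP; split; [rewrite -{1}r1 | rewrite -{1}r2]; exact: rank_leq_col.
  have g : (p + p + (q + q) = 2 * p + 2 * q)%N by rewrite !mul2n !addnn.
  pose e := etrans (esym g) h0.
  have cc B := @cast_conj _ _ (etrans g e) V B VV VtV.
  exists p, q, e, (adjmx (castmx (etrans g e, erefl m) V)).
  split; first exact: (cc 0).1.
  move=> A hA.
  rewrite (pq_Bblk _ _ _ g) castmx_comp (cc _).2.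
  have [a [b [c eA]]] := herm0_decomp _ hA.
  have eA' : A = mx2 (rC c) (rC a - 'i * rC b) (rC a + 'i * rC b) (- rC c).
    rewrite eA /sx /sy /sz !mx2_scale !mx2_add; apply: mx2_inj; simp2 => //.
    - by rewrite mulrC.
    - by rewrite mulrC.
  have h1 := herm0Z a sx hsx; have h2 := herm0Z b sy hsy; have h3 := herm0Z c sz hsz.
  have ephi : phi A = rC a *: X + rC b *: Y + rC c *: Z.
    by rewrite eA (@phiD _ _ lin _ _ (herm0D _ _ h1 h2) h3) (@phiD _ _ lin _ _ h1 h2) !(@phiZ _ _ lin).
  have hact : V *m phi A = Bblk p q A *m V.
    rewrite ephi eY [in RHS]eA'; apply: (@Vm_act m W X Z) => //.
  by rewrite -[phi A]mul1mx -VtV -mulmxA hact mulmxA.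
- case=> p [q [e [U [uU hphi]]]].
  subst m.
  have hphi' : forall A, herm0 A -> phi A = U *m pq_block p q A *m adjmx U.
    by move=> A hA; rewrite hphi // castmx_id.
  split.
  + move=> a b A B hA hB.
    rewrite (hphi' _ (herm0D _ _ (herm0Z a A hA) (herm0Z b B hB))) (hphi' A hA) (hphi' B hB).
    by rewrite pq_lin mulmxDr mulmxDl -!scalemxAr -!scalemxAl.
  + move=> A [hA uA]; split; first exact: phi_maps.
    have AA : A *m A = 1%:M by apply: herm_sq => //; case: hA.
    have UtU : adjmx U *m U = 1%:M by apply: mulmx1C; apply/unitaryE.
    apply/unitaryE; rewrite (phi_maps A hA) (hphi' A hA).
    rewrite -!mulmxA (mulmxA (adjmx U) U) UtU mul1mx (mulmxA (pq_block p q A)).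
    by rewrite pq_sq // mul1mx; apply/unitaryE.
Qed.
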